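(* Let $n\ge 1$, $N=2n+1$, and let $H_N$ be the simply connected $(2n+1)$-dimensional Heisenberg group, whose Lie algebra $\mathfrak{n}$ has a basis $F_1,\dots,F_{2n},F_N$ with the only nonzero brackets $[F_i,F_{j+n}]=\delta_{ij}F_N$ for $1\le i,j\le n$ (so $[F_i,F_j]=[F_i,F_N]=[F_{i+n},F_{j+n}]=[F_{i+n},F_N]=0$). Let $g_2$ be the left-invariant Lorentzian metric with $g_2(F_1,F_1)=\cdots=g_2(F_{2n},F_{2n})=-g_2(F_N,F_N)=1$ and all other pairings of basis vectors equal to $0$. Then $g_2$ is a nilsoliton, and $(\mathfrak{n},g_2)$ admits a metric solvable extension which is an Einstein metric.
   Context: For a simply connected Lie group $G$ with Lie algebra $\mathfrak{g}$ and left-invariant pseudo-Riemannian metric $g$, $g$ is an algebraic Ricci soliton if $\mathrm{ric}=c\,\mathrm{Id}+D$ for some $c\in\mathbb{R}$ and some derivation $D$ of $\mathfrak{g}$, where $\mathrm{ric}$ is the Ricci operator ($g(\mathrm{ric}X,Y)=\mathrm{Ric}(X,Y)$); it is called a nilsoliton if $G$ is nilpotent and a solvsoliton if $G$ is solvable. A metric solvable extension of $(\mathfrak{n},g)$ is a solvable Lie algebra $\mathfrak{s}=\mathfrak{a}\oplus\mathfrak{n}$ (as vector spaces) with Lie bracket $[\cdot,\cdot]'$ and a pseudo-Riemannian inner product $\tilde g$ on $\mathfrak{s}$ such that $[\mathfrak{s},\mathfrak{s}]'=\mathfrak{n}=\mathfrak{a}^{\perp}$ (orthogonal complement w.r.t.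 $\tilde g$), $[X,Y]'=[X,Y]$ and $\tilde g(X,Y)=g(X,Y)$ for all $X,Y\in\mathfrak{n}$. Such an extension is Einstein if the corresponding left-invariant metric satisfies $\mathrm{Ric}(\tilde g)=\kappa\tilde g$ for a constant $\kappa$. *)

(* Defs.v *)
From HB Require Import structures.
From mathcomp Require Import all_boot all_order all_algebra.
From mathcomp Require Import reals.
Set Implicit Arguments. Unset Strict Implicit. Unset Printing Implicit Defensive.
Import Order.TTheory GRing.Theory Num.Theory.
Local Open Scope ring_scope.

(* A real Lie algebra of dimension m is modelled on row vectors 'rV[R]_m,
   with standard basis evec i, and bracket given by structure constants
   sc i j = [e_i, e_j] (so the bracket is automatically bilinear). *)
Definition evec (R : realType) (m : nat) (i : 'I_m) : 'rV[R]_m := delta_mx 0 i.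

Definition lbr (R : realType) (m : nat) (sc : 'I_m -> 'I_m -> 'rV[R]_m)
  (X Y : 'rV[R]_m) : 'rV[R]_m :=
  \sum_(i < m) \sum_(j < m) (X 0 i * Y 0 j) *: sc i j.

Definition is_lie (R : realType) (m : nat) (sc : 'I_m -> 'I_m -> 'rV[R]_m) : Prop :=
  (forall X, lbr sc X X = 0) /\
  (forall X Y Z, lbr sc X (lbr sc Y Z) + lbr sc Y (lbr sc Z X)
                 + lbr sc Z (lbr sc X Y) = 0).

(* Subspaces are represented by row spaces of matrices (mxalgebra). *)
Definition brspace (R : realType) (m : nat) (sc : 'I_m -> 'I_m -> 'rV[R]_m)
  (U W : 'M[R]_m) : 'M[R]_m :=
  (\sum_(i < m) \sum_(j < m) <<lbr sc (row i U) (row j W)>>)%MS.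

Definition lcs (R : realType) (m : nat) (sc : 'I_m -> 'I_m -> 'rV[R]_m) (k : nat)
  : 'M[R]_m := iter k (brspace sc 1%:M) 1%:M.
Definition derived (R : realType) (m : nat) (sc : 'I_m -> 'I_m -> 'rV[R]_m) (k : nat)
  : 'M[R]_m := iter k (fun U => brspace sc U U) 1%:M.

Definition nilpotent_lie (R : realType) (m : nat) (sc : 'I_m -> 'I_m -> 'rV[R]_m) : Prop :=
  exists k, (lcs sc k == (0 : 'M[R]_m))%MS.
Definition solvable_lie (R : realType) (m : nat) (sc : 'I_m -> 'I_m -> 'rV[R]_m) : Prop :=
  exists k, (derived sc k == (0 : 'M[R]_m))%MS.

Definition ip (R : realType) (m : nat) (G : 'M[R]_m) (X Y : 'rV[R]_m) : R :=
  (X *m G *m Y^T) 0 0.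

Definition pseudo_riem (R : realType) (m : nat) (G : 'M[R]_m) : Prop :=
  G^T = G /\ G \in unitmx.

(* Levi-Civita connection of the left-invariant metric (Koszul formula):
   2 g(nabla_X Y, Z) = g([X,Y],Z) - g([Y,Z],X) + g([Z,X],Y). *)
Definition nabla (R : realType) (m : nat) (sc : 'I_m -> 'I_m -> 'rV[R]_m)
  (G : 'M[R]_m) (X Y : 'rV[R]_m) : 'rV[R]_m :=
  (2^-1 *: \row_k (ip G (lbr sc X Y) (evec R k) - ip G (lbr sc Y (evec R k)) X
                   + ip G (lbr sc (evec R k) X) Y)) *m invmx G.

Definition curv (R : realType) (m : nat) (sc : 'I_m -> 'I_m -> 'rV[R]_m)
  (G : 'M[R]_m) (X Y Z : 'rV[R]_m) : 'rV[R]_m :=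
  nabla sc G X (nabla sc G Y Z) - nabla sc G Y (nabla sc G X Z)
  - nabla sc G (lbr sc X Y) Z.

Definition ricci_form (R : realType) (m : nat) (sc : 'I_m -> 'I_m -> 'rV[R]_m)
  (G : 'M[R]_m) : 'M[R]_m :=
  \matrix_(a < m, b < m) \sum_(i < m) (curv sc G (evec R i) (evec R a) (evec R b)) 0 i.

(* Ricci operator ric, g(ric X, Y) = Ric(X,Y); acting on rows: X |-> X *m ric_op *)
Definition ric_op (R : realType) (m : nat) (sc : 'I_m -> 'I_m -> 'rV[R]_m)
  (G : 'M[R]_m) : 'M[R]_m := ricci_form sc G *m invmx G.

Definition derivation (R : realType) (m : nat) (sc : 'I_m -> 'I_m -> 'rV[R]_m)
  (D : 'M[R]_m) : Prop :=
  forall X Y, lbr sc X Y *m D = lbr sc (X *m D) Y + lbr sc X (Y *m D).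

Definition alg_ricci_soliton (R : realType) (m : nat) (sc : 'I_m -> 'I_m -> 'rV[R]_m)
  (G : 'M[R]_m) : Prop :=
  exists (c : R) (D : 'M[R]_m), derivation sc D /\ ric_op sc G = c%:M + D.

Definition nilsoliton (R : realType) (m : nat) (sc : 'I_m -> 'I_m -> 'rV[R]_m)
  (G : 'M[R]_m) : Prop :=
  nilpotent_lie sc /\ alg_ricci_soliton sc G.

Definition einstein (R : realType) (m : nat) (sc : 'I_m -> 'I_m -> 'rV[R]_m)
  (G : 'M[R]_m) : Prop :=
  exists kappa : R, ricci_form sc G = kappa *: G.

(* s = a (+) n modelled on 'rV_(k + N): first k coordinates span a,
   last N coordinates are n (with its given basis). *)
Definition incl_n (R : realType) (k N : nat) (X : 'rV[R]_N) : 'rV[R]_(k + N) :=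
  row_mx 0 X.
Definition a_sp (R : realType) (k N : nat) : 'M[R]_(k, k + N) := row_mx 1%:M 0.
Definition n_sp (R : realType) (k N : nat) : 'M[R]_(N, k + N) := row_mx 0 1%:M.

Definition metric_solvable_ext (R : realType) (N : nat)
  (sc : 'I_N -> 'I_N -> 'rV[R]_N) (G : 'M[R]_N) (k : nat)
  (sc' : 'I_(k + N) -> 'I_(k + N) -> 'rV[R]_(k + N)) (G' : 'M[R]_(k + N)) : Prop :=
  is_lie sc' /\ solvable_lie sc' /\ pseudo_riem G' /\
      (brspace sc' 1%:M 1%:M == n_sp R k N)%MS /\
      (forall X : 'rV[R]_(k + N), (X <= n_sp R k N)%MS <->
         (forall Y : 'rV[R]_(k + N), (Y <= a_sp R k N)%MS -> ip G' X Y = 0)) /\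
      (forall X Y : 'rV[R]_N, lbr sc' (incl_n k X) (incl_n k Y) = incl_n k (lbr sc X Y)) /\
      (forall X Y : 'rV[R]_N, ip G' (incl_n k X) (incl_n k Y) = ip G X Y).

(* Heisenberg algebra of dimension 2n+1: index i (0-based) is F_(i+1),
   index 2n (= ord_max) is F_N.  [F_i, F_(i+n)] = F_N = -[F_(i+n), F_i]. *)
Definition heis_sc (R : realType) (n : nat) (i j : 'I_(n.*2.+1)) : 'rV[R]_(n.*2.+1) :=
  if ((i < n)%N && (nat_of_ord j == (nat_of_ord i + n)%N)) then evec R ord_max
  else if ((j < n)%N && (nat_of_ord i == (nat_of_ord j + n)%N)) then - evec R ord_max
  else 0.

Definition heis_g2 (R : realType) (n : nat) : 'M[R]_(n.*2.+1) :=
  \matrix_(i, j) (if i == j then (if i == ord_max then -1 else 1) else 0).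

(* Main.v *)
Require Import Defs.
From HB Require Import structures.
From mathcomp Require Import all_boot all_order all_algebra.
From mathcomp Require Import reals.
From mathcomp Require Import ring lra zify.
Set Implicit Arguments. Unset Strict Implicit. Unset Printing Implicit Defensive.
Import GRing.Theory Num.Theory.
Local Open Scope ring_scope.


Lemma evec_mul (R : realType) m p (i : 'I_m) (M : 'M[R]_(m, p)) j :
  (evec R i *m M) 0 j = M i j.
Proof. by rewrite /evec -rowE mxE. Qed.

Lemma sum_coord (R : realType) m (c : 'cV[R]_m) (v : 'rV[R]_m) :
  \sum_i (evec R i *m c) 0 0 * v 0 i = (v *m c) 0 0.
Proof. rewrite mxE; apply: eq_bigr => i _; by rewrite evec_mul mulrC. Qed.

Lemma mx11_mul (R : realType) m (u : 'rV[R]_m) (v : 'cV[R]_m) (w : 'rV[R]_m) (x : 'cV[R]_m) :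
  (u *m (v *m w) *m x) 0 0 = (u *m v) 0 0 * (w *m x) 0 0.
Proof.
by rewrite mulmxA -mulmxA [in LHS]mxE big_ord1.
Qed.

Section Gen.
Variables (R : realType) (m : nat).
Variables (eA eN : 'rV[R]_m) (P J : 'M[R]_m) (t nn dA : R).
Variable sc : 'I_m -> 'I_m -> 'rV[R]_m.

Definition aa (X : 'rV[R]_m) := (X *m eA^T) 0 0.
Definition zz (X : 'rV[R]_m) := (X *m eN^T) 0 0.
Definition vv (X Y : 'rV[R]_m) := (X *m (P *m Y^T)) 0 0.
Definition om (X Y : 'rV[R]_m) := (X *m (J *m Y^T)) 0 0.
Definition GG : 'M[R]_m := P - eA^T *m eA - eN^T *m eN.
Definition Br (X Y : 'rV[R]_m) : 'rV[R]_m :=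
  t *: (aa X *: (Y *m P) - aa Y *: (X *m P))
  + (om X Y + 2 * t * (aa X * zz Y - aa Y * zz X)) *: eN.
Definition Nab (X Y : 'rV[R]_m) : 'rV[R]_m :=
  (- t * (vv X Y - 2 * zz X * zz Y)) *: eA - (t * aa Y) *: (X *m P)
  + (zz X / 2) *: (Y *m J) + (zz Y / 2) *: (X *m J)
  + (om X Y / 2 - 2 * t * aa Y * zz X) *: eN.

Hypothesis HPt : P^T = P.
Hypothesis HJt : J^T = - J.
Hypothesis HPP : P *m P = P.
Hypothesis HPJ : P *m J = J.
Hypothesis HJP : J *m P = J.
Hypothesis HJJ : J *m J = - P.
Hypothesis HAP : eA *m P = 0.
Hypothesis HNP : eN *m P = 0.
Hypothesis HaA : aa eA = dA.
Hypothesis HaN : aa eN = 0.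
Hypothesis HzA : zz eA = 0.
Hypothesis HzN : zz eN = 1.
Hypothesis Hcase : t = 0 \/ dA = 1.
Hypothesis HGG : GG *m GG = 1%:M.
Hypothesis HtrP : \tr P = 2 * nn.
Hypothesis HtrJ : \tr J = 0.
Hypothesis Hsc : forall i j, sc i j = Br (evec R i) (evec R j).

Lemma HAJ : eA *m J = 0. Proof. by rewrite -HPJ mulmxA HAP mul0mx. Qed.
Lemma HNJ : eN *m J = 0. Proof. by rewrite -HPJ mulmxA HNP mul0mx. Qed.

Lemma aD u v : aa (u + v) = aa u + aa v. Proof. by rewrite /aa mulmxDl mxE. Qed.
Lemma aN u : aa (- u) = - aa u. Proof. by rewrite /aa mulNmx mxE. Qed.
Lemma aZ c u : aa (c *: u) = c * aa u. Proof. by rewrite /aa -scalemxAl mxE. Qed.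
Lemma a0 : aa 0 = 0. Proof. by rewrite /aa mul0mx mxE. Qed.
Lemma zD u v : zz (u + v) = zz u + zz v. Proof. by rewrite /zz mulmxDl mxE. Qed.
Lemma zN u : zz (- u) = - zz u. Proof. by rewrite /zz mulNmx mxE. Qed.
Lemma zZ c u : zz (c *: u) = c * zz u. Proof. by rewrite /zz -scalemxAl mxE. Qed.
Lemma z0 : zz 0 = 0. Proof. by rewrite /zz mul0mx mxE. Qed.
Lemma vvDl u v w : vv (u + v) w = vv u w + vv v w. Proof. by rewrite /vv mulmxDl mxE. Qed.
Lemma vvNl u w : vv (- u) w = - vv u w. Proof. by rewrite /vv mulNmx mxE. Qed.
Lemma vvZl c u w : vv (c *: u) w = c * vv u w. Proof. by rewrite /vv -scalemxAl mxE. Qed.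
Lemma vvDr u v w : vv w (u + v) = vv w u + vv w v.
Proof. by rewrite /vv linearD /= mulmxDr mulmxDr mxE. Qed.
Lemma vvNr u w : vv w (- u) = - vv w u.
Proof. by rewrite /vv linearN /= mulmxN mulmxN mxE. Qed.
Lemma vvZr c u w : vv w (c *: u) = c * vv w u.
Proof. by rewrite /vv linearZ /= -!scalemxAr mxE. Qed.
Lemma omDl u v w : om (u + v) w = om u w + om v w. Proof. by rewrite /om mulmxDl mxE. Qed.
Lemma omNl u w : om (- u) w = - om u w. Proof. by rewrite /om mulNmx mxE. Qed.
Lemma omZl c u w : om (c *: u) w = c * om u w. Proof. by rewrite /om -scalemxAl mxE. Qed.
Lemma omDr u v w : om w (u + v) = om w u + om w v.
Proof. by rewrite /om linearD /= mulmxDr mulmxDr mxE. Qed.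
Lemma omNr u w : om w (- u) = - om w u.
Proof. by rewrite /om linearN /= mulmxN mulmxN mxE. Qed.
Lemma omZr c u w : om w (c *: u) = c * om w u.
Proof. by rewrite /om linearZ /= -!scalemxAr mxE. Qed.

Lemma sym11 (u : 'rV[R]_m) (M : 'M[R]_m) (w : 'rV[R]_m) :
  (u *m (M *m w^T)) 0 0 = (w *m (M^T *m u^T)) 0 0.
Proof.
have E (A : 'M[R]_1) : A 0 0 = A^T 0 0 by rewrite mxE.
by rewrite E !trmx_mul trmxK mulmxA.
Qed.

Lemma vvC u w : vv u w = vv w u. Proof. by rewrite /vv sym11 HPt. Qed.
Lemma omC u w : om u w = - om w u.
Proof. by rewrite /om sym11 HJt mulNmx mulmxN mxE. Qed.

Lemma aP u : aa (u *m P) = 0.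
Proof. by rewrite /aa -mulmxA -HPt -trmx_mul HAP trmx0 mulmx0 mxE. Qed.
Lemma zP u : zz (u *m P) = 0.
Proof. by rewrite /zz -mulmxA -HPt -trmx_mul HNP trmx0 mulmx0 mxE. Qed.
Lemma aJ u : aa (u *m J) = 0.
Proof. by rewrite /aa -mulmxA -[J]opprK -HJt mulNmx mulmxN -trmx_mul HAJ trmx0 mulmx0 oppr0 mxE. Qed.
Lemma zJ u : zz (u *m J) = 0.
Proof. by rewrite /zz -mulmxA -[J]opprK -HJt mulNmx mulmxN -trmx_mul HNJ trmx0 mulmx0 oppr0 mxE. Qed.
Lemma vvPl u w : vv (u *m P) w = vv u w. Proof. by rewrite /vv -mulmxA [P *m (P *m _)]mulmxA HPP. Qed.
Lemma vvJl u w : vv (u *m J) w = om u w. Proof. by rewrite /vv -mulmxA [J *m (P *m _)]mulmxA HJP. Qed.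
Lemma vvPr u w : vv w (u *m P) = vv w u. Proof. by rewrite vvC vvPl vvC. Qed.
Lemma vvJr u w : vv w (u *m J) = om u w. Proof. by rewrite vvC vvJl. Qed.
Lemma omPl u w : om (u *m P) w = om u w. Proof. by rewrite /om -mulmxA [P *m (J *m _)]mulmxA HPJ. Qed.
Lemma omJl u w : om (u *m J) w = - vv u w.
Proof. by rewrite /om -mulmxA [J *m (J *m _)]mulmxA HJJ mulNmx mulmxN mxE. Qed.
Lemma omPr u w : om w (u *m P) = om w u. Proof. by rewrite omC omPl -omC. Qed.
Lemma omJr u w : om w (u *m J) = vv w u. Proof. by rewrite omC omJl opprK vvC. Qed.
Lemma vvAl w : vv eA w = 0. Proof. by rewrite /vv mulmxA HAP mul0mx mxE. Qed.
Lemma vvNl0 w : vv eN w = 0. Proof. by rewrite /vv mulmxA HNP mul0mx mxE. Qed.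
Lemma vvAr w : vv w eA = 0. Proof. by rewrite vvC vvAl. Qed.
Lemma vvNr0 w : vv w eN = 0. Proof. by rewrite vvC vvNl0. Qed.
Lemma omAl w : om eA w = 0. Proof. by rewrite /om mulmxA HAJ mul0mx mxE. Qed.
Lemma omNl0 w : om eN w = 0. Proof. by rewrite /om mulmxA HNJ mul0mx mxE. Qed.
Lemma omAr w : om w eA = 0. Proof. by rewrite omC omAl oppr0. Qed.
Lemma omNr0 w : om w eN = 0. Proof. by rewrite omC omNl0 oppr0. Qed.

Lemma vv0l w : vv 0 w = 0. Proof. by rewrite /vv mul0mx mxE. Qed.
Lemma vv0r w : vv w 0 = 0. Proof. by rewrite /vv trmx0 mulmx0 mulmx0 mxE. Qed.
Lemma om0l w : om 0 w = 0. Proof. by rewrite /om mul0mx mxE. Qed.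
Lemma om0r w : om w 0 = 0. Proof. by rewrite /om trmx0 mulmx0 mulmx0 mxE. Qed.

Lemma omxx u : om u u = 0.
Proof. have := omC u u; lra. Qed.

Lemma trE11 (u w : 'rV[R]_m) : (u *m w^T) 0 0 = (w *m u^T) 0 0.
Proof. have E (A : 'M[R]_1) : A 0 0 = A^T 0 0 by rewrite mxE. by rewrite E trmx_mul trmxK. Qed.

Lemma gE u w : ip GG u w = vv u w - aa u * aa w - zz u * zz w.
Proof.
have EB (A B : 'M[R]_1) : (A - B) 0 0 = A 0 0 - B 0 0 by rewrite !mxE.
rewrite /ip /GG !mulmxBr !mulmxBl !EB.
rewrite !mx11_mul -mulmxA /vv /aa /zz.
by rewrite !(trE11 eA) !(trE11 eN).
Qed.

Lemma ip_evec (G : 'M[R]_m) u k : ip G u (evec R k) = (u *m G) 0 k.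
Proof. by rewrite /ip /evec trmx_delta -colE mxE. Qed.

Lemma GGsym : GG^T = GG.
Proof. by rewrite /GG !linearB /= !trmx_mul !trmxK HPt. Qed.

Lemma GGunit : GG \in unitmx.
Proof. by case: (mulmx1_unit HGG). Qed.

Lemma invGG : invmx GG = GG.
Proof.
by rewrite -[RHS]mul1mx -(mulVmx GGunit) -mulmxA HGG mulmx1.
Qed.

Lemma gtest u v : (forall w, ip GG u w = ip GG v w) -> u = v.
Proof.
move=> h. have : u *m GG = v *m GG.
  by apply/rowP => k; rewrite -!ip_evec h.
by move/(congr1 (mulmx^~ GG)); rewrite -!mulmxA HGG !mulmx1.
Qed.

Lemma scaleL c (u : 'rV[R]_m) (M : 'M[R]_m) : (c *: u) *m M = c *: (u *m M).
Proof. by rewrite scalemxAl. Qed.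
Lemma mPP (u : 'rV[R]_m) : u *m P *m P = u *m P. Proof. by rewrite -mulmxA HPP. Qed.
Lemma mPJ (u : 'rV[R]_m) : u *m P *m J = u *m J. Proof. by rewrite -mulmxA HPJ. Qed.
Lemma mJP (u : 'rV[R]_m) : u *m J *m P = u *m J. Proof. by rewrite -mulmxA HJP. Qed.
Lemma mJJ (u : 'rV[R]_m) : u *m J *m J = - (u *m P). Proof. by rewrite -mulmxA HJJ mulmxN. Qed.

Lemma mDl (u v : 'rV[R]_m) (M : 'M[R]_m) : (u + v) *m M = u *m M + v *m M.
Proof. exact: mulmxDl. Qed.
Lemma mNl (u : 'rV[R]_m) (M : 'M[R]_m) : (- u) *m M = - (u *m M).
Proof. exact: mulNmx. Qed.
Lemma m0l (M : 'M[R]_m) : (0 : 'rV[R]_m) *m M = 0.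
Proof. exact: mul0mx. Qed.

Ltac vsimp := rewrite ?(mDl, mNl, m0l, scaleL, mPP, mPJ, mJP, mJJ, HAP, HNP, HAJ, HNJ).
Ltac asimp := rewrite ?(aD,aN,aZ,a0,zD,zN,zZ,z0, vvDl,vvNl,vvZl,vvDr,vvNr,vvZr,
   omDl,omNl,omZl,omDr,omNr,omZr, aP,zP,aJ,zJ, vvPl,vvJl,vvPr,vvJr,omPl,omJl,omPr,omJr,
   vvAl,vvNl0,vvAr,vvNr0,omAl,omNl0,omAr,omNr0, HaA,HaN,HzA,HzN, omxx, vv0l, vv0r, om0l, om0r).

Lemma koszul X Y W :
  2 * ip GG (Nab X Y) W = ip GG (Br X Y) W - ip GG (Br Y W) X + ip GG (Br W X) Y.
Proof.
rewrite !gE /Nab /Br; vsimp; asimp.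
rewrite ?(vvC Y X) ?(vvC W X) ?(vvC W Y) ?(omC Y X) ?(omC W X) ?(omC W Y).
by case: (Hcase) => E; rewrite ?E; field; rewrite ?pnatr_eq0.
Qed.

Ltac gsolve := apply: gtest => W; rewrite !gE /Br /Nab; vsimp; asimp;
  first [ by field; rewrite ?pnatr_eq0 | by case: (Hcase) => ->; field; rewrite ?pnatr_eq0 ].

Lemma BrDl u v w : Br (u + v) w = Br u w + Br v w. Proof. gsolve. Qed.
Lemma BrDr u v w : Br w (u + v) = Br w u + Br w v. Proof. gsolve. Qed.
Lemma BrZl c u w : Br (c *: u) w = c *: Br u w. Proof. gsolve. Qed.
Lemma BrZr c u w : Br w (c *: u) = c *: Br w u. Proof. gsolve. Qed.
Lemma Br0l w : Br 0 w = 0. Proof. by have := BrZl 0 0 w; rewrite !scale0r. Qed.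
Lemma Br0r w : Br w 0 = 0. Proof. by have := BrZr 0 0 w; rewrite !scale0r. Qed.

Lemma lbrE X Y : lbr sc X Y = Br X Y.
Proof.
have -> : Br X Y = Br (\sum_i X 0 i *: evec R i) (\sum_j Y 0 j *: evec R j).
  by rewrite /evec -!row_sum_delta.
rewrite (big_morph (fun u => Br u _) (fun u v => BrDl u v _) (Br0l _)).
rewrite /lbr; apply: eq_bigr => i _.
rewrite BrZl (big_morph (Br _) (fun u v => BrDr u v _) (Br0r _)) scaler_sumr.
apply: eq_bigr => j _; by rewrite BrZr scalerA Hsc.
Qed.

Lemma nablaE X Y : nabla sc GG X Y = Nab X Y.
Proof.
have H : Nab X Y *m GG = 2^-1 *: \row_k (ip GG (lbr sc X Y) (evec R k)
     - ip GG (lbr sc Y (evec R k)) X + ip GG (lbr sc (evec R k) X) Y).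
  apply/rowP => k; rewrite -ip_evec !mxE !lbrE -koszul.
  by field; rewrite ?pnatr_eq0.
by rewrite /nabla invGG -H -mulmxA HGG mulmx1.
Qed.

Ltac fsolve := first [ by field; rewrite ?pnatr_eq0 | by case: (Hcase) => ->; field; rewrite ?pnatr_eq0 ].

Lemma aNab U V : aa (Nab U V) = - t * (vv U V - 2 * zz U * zz V) * dA.
Proof. rewrite /Nab; asimp; fsolve. Qed.
Lemma zNab U V : zz (Nab U V) = om U V / 2 - 2 * t * aa V * zz U.
Proof. rewrite /Nab; asimp; fsolve. Qed.
Lemma vvNab U V W : vv (Nab U V) W = - (t * aa V) * vv U W + zz U / 2 * om V W + zz V / 2 * om U W.
Proof. rewrite /Nab; asimp; fsolve. Qed.
Lemma omNab U V W : om (Nab U V) W = - (t * aa V) * om U W - zz U / 2 * vv V W - zz V / 2 * vv U W.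
Proof. rewrite /Nab; asimp; fsolve. Qed.
Lemma vvNabr U V W : vv W (Nab U V) = - (t * aa V) * vv U W + zz U / 2 * om V W + zz V / 2 * om U W.
Proof. by rewrite vvC vvNab. Qed.
Lemma omNabr U V W : om W (Nab U V) = (t * aa V) * om U W + zz U / 2 * vv V W + zz V / 2 * vv U W.
Proof. rewrite omC omNab; fsolve. Qed.
Lemma aBr U V : aa (Br U V) = 0.
Proof. rewrite /Br; asimp; fsolve. Qed.
Lemma zBr U V : zz (Br U V) = om U V + 2 * t * (aa U * zz V - aa V * zz U).
Proof. rewrite /Br; asimp; fsolve. Qed.
Lemma vvBr U V W : vv (Br U V) W = t * (aa U * vv V W - aa V * vv U W).
Proof. rewrite /Br; asimp; fsolve. Qed.
Lemma omBr U V W : om (Br U V) W = t * (aa U * om V W - aa V * om U W).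
Proof. rewrite /Br; asimp; fsolve. Qed.
Lemma vvBrr U V W : vv W (Br U V) = t * (aa U * vv V W - aa V * vv U W).
Proof. by rewrite vvC vvBr. Qed.
Lemma omBrr U V W : om W (Br U V) = - (t * (aa U * om V W - aa V * om U W)).
Proof. by rewrite omC omBr. Qed.

Ltac nsimp := rewrite ?(aNab, zNab, vvNab, omNab, vvNabr, omNabr,
   aBr, zBr, vvBr, omBr, vvBrr, omBrr, aD,aN,aZ,a0,zD,zN,zZ,z0, vvDl,vvNl,vvZl,vvDr,vvNr,vvZr,
   omDl,omNl,omZl,omDr,omNr,omZr).

Definition NF (X Y Z : 'rV[R]_m) : 'rV[R]_m :=
  0
  + (((1)*(t)*(t)*(vv Y Z) + (-4)*(t)*(t)*(zz Y)*(zz Z)) * aa X) *: eA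
  + (((-1)*(t)*(zz Z)) * om X Y) *: eA
  + (((-1 / 2)*(t)*(zz Y)) * om X Z) *: eA
  + (((-1)*(aa Y)*(t)*(t)) * vv X Z) *: eA
  + (((4)*(aa Y)*(t)*(t)*(zz Z) + (1 / 2)*(om Y Z)*(t)) * zz X) *: eA
  + (((4)*(aa Z)*(t)*(t)*(zz Y) + (-1 / 2)*(om Y Z)*(t)) * aa X) *: eN
  + (((1)*(aa Z)*(t)) * om X Y) *: eN
  + (((1 / 2)*(aa Y)*(t)) * om X Z) *: eN
  + (((-2)*(t)*(t)*(zz Y) + (1 / 4)*(zz Y)) * vv X Z) *: eN
  + (((-4)*(aa Y)*(aa Z)*(t)*(t) + (2)*(t)*(t)*(vv Y Z) + (-1 / 4)*(vv Y Z)) * zz X) *: eN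
  + ((1 / 2)*(aa Y)*(t)*(zz Z) + (-1 / 2)*(aa Z)*(t)*(zz Y) + (1 / 4)*(om Y Z)) *: (X *m J)
  + (((-1 / 2)*(t)*(zz Z)) * aa X) *: (Y *m J)
  + (((-1 / 4)) * om X Z) *: (Y *m J)
  + (((1 / 2)*(aa Z)*(t)) * zz X) *: (Y *m J)
  + (((-1)*(t)*(zz Y)) * aa X) *: (Z *m J)
  + (((-1 / 2)) * om X Y) *: (Z *m J)
  + (((1)*(aa Y)*(t)) * zz X) *: (Z *m J)
  + ((-1)*(aa Y)*(aa Z)*(t)*(t) + (1)*(t)*(t)*(vv Y Z) + (-2)*(t)*(t)*(zz Y)*(zz Z) + (1 / 4)*(zz Y)*(zz Z)) *: (X *m P)
  + (((1)*(aa Z)*(t)*(t)) * aa X) *: (Y *m P)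
  + (((-1)*(t)*(t)) * vv X Z) *: (Y *m P)
  + (((2)*(t)*(t)*(zz Z) + (-1 / 4)*(zz Z)) * zz X) *: (Y *m P).

Lemma curv_core (N B : 'rV[R]_m -> 'rV[R]_m -> 'rV[R]_m)
  (aN_ : forall U V, aa (N U V) = - t * (vv U V - 2 * zz U * zz V) * dA)
  (zN_ : forall U V, zz (N U V) = om U V / 2 - 2 * t * aa V * zz U)
  (vN_ : forall U V W, vv (N U V) W = - (t * aa V) * vv U W + zz U / 2 * om V W + zz V / 2 * om U W)
  (oN_ : forall U V W, om (N U V) W = - (t * aa V) * om U W - zz U / 2 * vv V W - zz V / 2 * vv U W)
  (vNr_ : forall U V W, vv W (N U V) = - (t * aa V) * vv U W + zz U / 2 * om V W + zz V / 2 * om U W)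
  (oNr_ : forall U V W, om W (N U V) = (t * aa V) * om U W + zz U / 2 * vv V W + zz V / 2 * vv U W)
  (aB_ : forall U V, aa (B U V) = 0)
  (zB_ : forall U V, zz (B U V) = om U V + 2 * t * (aa U * zz V - aa V * zz U))
  (vB_ : forall U V W, vv (B U V) W = t * (aa U * vv V W - aa V * vv U W))
  (oB_ : forall U V W, om (B U V) W = t * (aa U * om V W - aa V * om U W))
  (vBr_ : forall U V W, vv W (B U V) = t * (aa U * vv V W - aa V * vv U W))
  (oBr_ : forall U V W, om W (B U V) = - (t * (aa U * om V W - aa V * om U W)))
  X Y Z W :
  ip GG (N X (N Y Z) - N Y (N X Z) - N (B X Y) Z) W = ip GG (NF X Y Z) W.
Proof.
rewrite !gE /NF.
rewrite ?(aN_, zN_, vN_, oN_, vNr_, oNr_, aB_, zB_, vB_, oB_, vBr_, oBr_,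
   aD,aN,aZ,a0,zD,zN,zZ,z0, vvDl,vvNl,vvZl,vvDr,vvNr,vvZr,
   omDl,omNl,omZl,omDr,omNr,omZr).
asimp.
rewrite ?(vvC Y X) ?(vvC Z X) ?(vvC W X) ?(vvC Z Y) ?(vvC W Y) ?(vvC W Z).
rewrite ?(omC Y X) ?(omC Z X) ?(omC W X) ?(omC Z Y) ?(omC W Y) ?(omC W Z).
fsolve.
Qed.

Lemma curv_nf X Y Z : curv sc GG X Y Z = NF X Y Z.
Proof.
rewrite /curv !nablaE !lbrE; apply: gtest => W; apply: curv_core.
- exact: aNab. - exact: zNab. - exact: vvNab. - exact: omNab. - exact: vvNabr. - exact: omNabr.
- exact: aBr. - exact: zBr. - exact: vvBr. - exact: omBr. - exact: vvBrr. - exact: omBrr.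
Qed.

Definition trv (F : 'rV[R]_m -> 'rV[R]_m) := \sum_i (F (evec R i)) 0 i.
Lemma trvD F G : trv (fun X => F X + G X) = trv F + trv G.
Proof. rewrite /trv -big_split; apply: eq_bigr => i _; by rewrite mxE. Qed.
Lemma trv0 : trv (fun _ => 0) = 0.
Proof. rewrite /trv big1 // => i _; by rewrite mxE. Qed.
Lemma trv_c k (c : 'cV[R]_m) v : trv (fun X => (k * (X *m c) 0 0) *: v) = k * (v *m c) 0 0.
Proof.
rewrite /trv -sum_coord mulr_sumr; apply: eq_bigr => i _; by rewrite mxE mulrA.
Qed.
Lemma trv_a k v : trv (fun X => (k * aa X) *: v) = k * aa v. Proof. exact: trv_c. Qed.
Lemma trv_z k v : trv (fun X => (k * zz X) *: v) = k * zz v. Proof. exact: trv_c. Qed.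
Lemma trv_vv k U v : trv (fun X => (k * vv X U) *: v) = k * vv v U. Proof. exact: trv_c. Qed.
Lemma trv_om k U v : trv (fun X => (k * om X U) *: v) = k * om v U. Proof. exact: trv_c. Qed.
Lemma trv_M k M : trv (fun X => k *: (X *m M)) = k * \tr M.
Proof.
rewrite /trv /mxtrace mulr_sumr; apply: eq_bigr => i _; by rewrite mxE evec_mul.
Qed.

Definition alp := 1/2 + 2 * t * t * nn + 2 * t * t.
Definition bet := nn / 2 - 4 * t * t * nn - 4 * t * t.
Definition gam := - 2 * nn * t * t - 4 * t * t.

Lemma ric_gen Y Z : trv (fun X => curv sc GG X Y Z) =
  alp * vv Y Z + bet * (zz Y * zz Z) + gam * (aa Y * aa Z).
Proof.
have -> : trv (fun X => curv sc GG X Y Z) = trv (fun X => NF X Y Z).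
  by apply: eq_bigr => i _; rewrite curv_nf.
rewrite /NF !trvD trv0 ?(trv_a, trv_z, trv_vv, trv_om, trv_M) HtrP HtrJ.
asimp.
rewrite ?(vvC Z Y) ?(omC Z Y).
rewrite /alp /bet /gam; fsolve.
Qed.

Lemma ricci_gen : ricci_form sc GG =
  alp *: P + bet *: (eN^T *m eN) + gam *: (eA^T *m eA).
Proof.
apply/matrixP => i j.
have -> : ricci_form sc GG i j = trv (fun X => curv sc GG X (evec R i) (evec R j)).
  by rewrite /ricci_form mxE.
rewrite ric_gen /vv /zz /aa !evec_mul /evec trmx_delta -colE.
by rewrite !mxE !big_ord1 !mxE.
Qed.

Lemma rank1 (u v w : 'rV[R]_m) : u *m (v^T *m w) = (u *m v^T) 0 0 *: w.
Proof. by rewrite -mul_scalar_mx -mx11_scalar mulmxA. Qed.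

Lemma rankA u : u *m (eA^T *m eA) = aa u *: eA. Proof. exact: rank1. Qed.
Lemma rankN u : u *m (eN^T *m eN) = zz u *: eN. Proof. exact: rank1. Qed.

Lemma vGG v : v *m GG = v *m P - aa v *: eA - zz v *: eN.
Proof. by rewrite /GG !mulmxBr !rank1. Qed.

Lemma jac_core (B : 'rV[R]_m -> 'rV[R]_m -> 'rV[R]_m)
  (aB_ : forall U V, aa (B U V) = 0)
  (zB_ : forall U V, zz (B U V) = om U V + 2 * t * (aa U * zz V - aa V * zz U))
  (vB_ : forall U V W, vv (B U V) W = t * (aa U * vv V W - aa V * vv U W))
  (oB_ : forall U V W, om (B U V) W = t * (aa U * om V W - aa V * om U W))
  (vBr_ : forall U V W, vv W (B U V) = t * (aa U * vv V W - aa V * vv U W))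
  (oBr_ : forall U V W, om W (B U V) = - (t * (aa U * om V W - aa V * om U W)))
  X Y Z W :
  ip GG (B X (B Y Z) + B Y (B Z X) + B Z (B X Y)) W = ip GG 0 W.
Proof.
rewrite !gE.
rewrite ?(aB_, zB_, vB_, oB_, vBr_, oBr_,
   aD,aN,aZ,a0,zD,zN,zZ,z0, vvDl,vvNl,vvZl,vvDr,vvNr,vvZr,
   omDl,omNl,omZl,omDr,omNr,omZr).
asimp.
rewrite ?(vvC Y X) ?(vvC Z X) ?(vvC W X) ?(vvC Z Y) ?(vvC W Y) ?(vvC W Z).
rewrite ?(omC Y X) ?(omC Z X) ?(omC W X) ?(omC Z Y) ?(omC W Y) ?(omC W Z).
fsolve.
Qed.

Lemma lie_sc : is_lie sc.
Proof.
split.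
- move=> X; rewrite lbrE; apply: gtest => W; rewrite !gE /Br; asimp; fsolve.
- move=> X Y Z; rewrite !lbrE; apply: gtest => W; apply: jac_core.
  + exact: aBr. + exact: zBr. + exact: vvBr. + exact: omBr. + exact: vvBrr. + exact: omBrr.
Qed.

Lemma DXE (Ht : t = 0) u :
  u *m (ricci_form sc GG *m invmx GG - ((nn + 2) / 2)%:M) =
  alp *: (u *m P) - (bet * zz u) *: eN - (gam * dA * aa u) *: eA - ((nn + 2) / 2) *: u.
Proof.
rewrite ricci_gen invGG mulmxBr mul_mx_scalar mulmxA vGG !mulmxDr -!scalemxAr rankA rankN.
vsimp.
apply: gtest => W; rewrite !gE; asimp.
by rewrite /alp /bet /gam Ht; field; rewrite ?pnatr_eq0.
Qed.

Lemma ricderiv (Ht : t = 0) :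
  derivation sc (ricci_form sc GG *m invmx GG - ((nn + 2) / 2)%:M).
Proof.
move=> X Y; rewrite !DXE // !lbrE.
apply: gtest => W; rewrite !gE /Br; asimp.
by rewrite /alp /bet /gam Ht; field; rewrite ?pnatr_eq0.
Qed.

Lemma Br_n U V : aa U = 0 -> aa V = 0 -> Br U V = om U V *: eN.
Proof.
rewrite /Br => hU hV; rewrite hU hV !mul0r !scale0r subrr scaler0 add0r subrr mulr0 addr0.
by [].
Qed.

Lemma Br_surj (Ht : t != 0) (Hd : dA = 1) v : aa v = 0 ->
  v = Br eA (t^-1 *: (v *m P) + (zz v / (2 * t)) *: eN).
Proof.
move=> hv; apply: gtest => W; rewrite !gE.
rewrite ?(vvBr, zBr, aBr, aD,aN,aZ,a0,zD,zN,zZ,z0, vvDl,vvNl,vvZl,vvDr,vvNr,vvZr,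
   omDl,omNl,omZl,omDr,omNr,omZr).
by asimp; rewrite hv Hd; field.
Qed.

Lemma ip_aZ c X : ip GG X (c *: eA) = - (c * dA * aa X).
Proof. rewrite gE; asimp; ring. Qed.

End Gen.


Lemma sum1 (R : realType) m (F : 'I_m -> R) i0 :
  (forall k, k != i0 -> F k = 0) -> \sum_k F k = F i0.
Proof. move=> h; rewrite (bigD1 i0) //= big1 ?addr0 // => k /h. Qed.

Ltac bcase := repeat match goal with |- context [nat_of_bool ?b] =>
  lazymatch b with true => fail | false => fail | _ => let E := fresh "E" in case E: b end end.
Ltac bsolve := bcase; rewrite /=; first [ring | exfalso; lia].

Section Heis.
Variables (R : realType) (n : nat).
Local Notation N := (n.*2.+1).

Definition hP : 'M[R]_N := \matrix_(i, j) (((i : nat) == j) && (i < n.*2)%N)%:R.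
Definition hJ : 'M[R]_N := \matrix_(i, j)
  (((i < n)%N && ((j : nat) == i + n)%N)%:R - ((j < n)%N && ((i : nat) == j + n)%N)%:R).
Definition hN : 'rV[R]_N := evec R ord_max.
Definition hA : 'rV[R]_N := 0.

Lemma neq_nat m (k i : 'I_m) : k != i -> (k : nat) != i.
Proof. by rewrite val_eqE. Qed.

Lemma hPt : hP^T = hP.
Proof. apply/matrixP => i j; rewrite !mxE eq_sym; bsolve. Qed.

Lemma hJt : hJ^T = - hJ.
Proof. apply/matrixP => i j; rewrite !mxE; ring. Qed.

Lemma hPP : hP *m hP = hP.
Proof.
apply/matrixP => i j; rewrite !mxE (sum1 (i0 := i)).
  by rewrite !mxE; bsolve.
by move=> k /neq_nat hk; rewrite !mxE; bsolve.
Qed.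

Lemma hPJ : hP *m hJ = hJ.
Proof.
apply/matrixP => i j; rewrite !mxE (sum1 (i0 := i)).
  by rewrite !mxE; have hi0 := ltn_ord i; have hj0 := ltn_ord j; bsolve.
by move=> k /neq_nat hk; rewrite !mxE; bsolve.
Qed.

Lemma hJP : hJ *m hP = hJ.
Proof.
apply/matrixP => i j; rewrite !mxE (sum1 (i0 := j)).
  by rewrite !mxE; have hi0 := ltn_ord i; have hj0 := ltn_ord j; bsolve.
by move=> k /neq_nat hk; rewrite !mxE; bsolve.
Qed.

Lemma hJJ : hJ *m hJ = - hP.
Proof.
apply/matrixP => i j; rewrite !mxE.
pose k0 : 'I_N := inord (if (i < n)%N then (i + n)%N else (i - n)%N).
have hk0 : (k0 : nat) = if (i < n)%N then (i + n)%N else (i - n)%N.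
  rewrite inordK //; have := ltn_ord i; case: ifP => h; lia.
rewrite (sum1 (i0 := k0)).
  rewrite !mxE hk0; have hi0 := ltn_ord i; have hj0 := ltn_ord j; case: ifP => hi; bsolve.
move=> k /neq_nat; rewrite hk0 => hk; rewrite !mxE.
have hi0 := ltn_ord i; case: ifP hk => hi hk; bsolve.
Qed.

Lemma hAP : hA *m hP = 0. Proof. by rewrite /hA mul0mx. Qed.

Lemma hNP : hN *m hP = 0.
Proof. apply/rowP => j; rewrite /hN evec_mul !mxE; have hm : (ord_max : 'I_N) = n.*2 :> nat by []; bsolve. Qed.

Lemma haA : aa hA hA = 0. Proof. by rewrite /aa /hA mul0mx mxE. Qed.
Lemma haN : aa hA hN = 0. Proof. by rewrite /aa /hA trmx0 mulmx0 mxE. Qed.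
Lemma hzA : zz hN hA = 0. Proof. by rewrite /zz /hA mul0mx mxE. Qed.
Lemma hzN : zz hN hN = 1.
Proof. by rewrite /zz /hN evec_mul !mxE !eqxx. Qed.

Lemma htrP : \tr hP = 2 * n%:R.
Proof.
rewrite /mxtrace big_ord_recr /= !mxE eqxx ltnn /= addr0.
under eq_bigr => i _ do rewrite !mxE eqxx /= ltn_ord.
by rewrite sumr_const card_ord -mul2n natrM.
Qed.

Lemma htrJ : \tr hJ = 0.
Proof. rewrite /mxtrace big1 // => i _; by rewrite !mxE subrr. Qed.

Lemma hPN : hP + hN^T *m hN = 1%:M.
Proof.
apply/matrixP => i j; rewrite !mxE big_ord1 !mxE -!val_eqE /=.
have hm : (ord_max : 'I_N) = n.*2 :> nat by [].
have hi0 := ltn_ord i; have hj0 := ltn_ord j; bsolve.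
Qed.

Lemma hGG : GG hA hN hP *m GG hA hN hP = 1%:M.
Proof.
rewrite /GG /hA trmx0 mul0mx subr0 mulmxBl !mulmxBr hPP.
have h1 : hP *m (hN^T *m hN) = 0 by rewrite mulmxA -hPt -trmx_mul hNP trmx0 mul0mx.
have h2 : hN^T *m hN *m hP = 0 by rewrite -mulmxA hNP mulmx0.
have h3 : hN^T *m hN *m (hN^T *m hN) = hN^T *m hN.
  rewrite -mulmxA [hN *m _]mulmxA [hN *m hN^T]mx11_scalar.
  have -> : (hN *m hN^T) 0 0 = 1 by exact: hzN.
  by rewrite mul1mx.
by rewrite h1 h2 h3 subr0 sub0r opprK hPN.
Qed.

Lemma g2E : heis_g2 R n = GG hA hN hP.
Proof.
apply/matrixP => i j; rewrite /heis_g2 /GG /hA trmx0 mul0mx subr0 !mxE big_ord1 !mxE -!val_eqE /=.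
have hm : (ord_max : 'I_N) = n.*2 :> nat by [].
have hi0 := ltn_ord i; have hj0 := ltn_ord j.
case: ifP => h1; [case: ifP => h2|]; bsolve.
Qed.

Lemma hsc i j : @heis_sc R n i j = Br hA hN hP hJ 0 (evec R i) (evec R j).
Proof.
rewrite /heis_sc /Br /om scale0r add0r mulr0 mul0r addr0 evec_mul /hN /evec trmx_delta -colE !mxE.
case: ifP => h1; [|case: ifP => h2]; bcase;
  first [exfalso; lia | by rewrite /= ?subr0 ?sub0r ?scale1r ?scaleN1r ?subrr ?scale0r].
Qed.

End Heis.

Lemma brspace_sub (R : realType) m (sc : 'I_m -> 'I_m -> 'rV[R]_m) (U W : 'M[R]_m) k (T : 'M[R]_(k, m)) :
  (forall X Y, (X <= U)%MS -> (Y <= W)%MS -> (lbr sc X Y <= T)%MS) -> (brspace sc U W <= T)%MS.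
Proof.
move=> h; rewrite /brspace; apply/sumsmx_subP => i _; apply/sumsmx_subP => j _.
by rewrite genmxE; apply: h; exact: row_sub.
Qed.

Section HeisNil.
Variables (R : realType) (n : nat).

Lemma hlbr X Y : lbr (@heis_sc R n) X Y = om (hJ R n) X Y *: hN R n.
Proof.
by rewrite (lbrE (hPt R n) (hPP R n) (hAP R n) (hNP R n) (haN R n) (hzN R n) (hGG R n) (@hsc R n))
  /Br scale0r add0r mulr0 mul0r addr0.
Qed.

Lemma hnil : nilpotent_lie (@heis_sc R n).
Proof.
exists 2%N; rewrite /lcs /=.
apply/andP; split; last exact: sub0mx.
apply: brspace_sub => X Y _ hY.
have hY' : (Y <= hN R n)%MS.
  apply: (submx_trans hY); apply: brspace_sub => X' Y' _ _; rewrite hlbr.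
  exact: scalemx_sub (submx_refl _).
case/submxP: hY' => D ->.
rewrite hlbr [D]mx11_scalar mul_scalar_mx omZr (omNr0 (hJt R n) (hPJ R n) (hNP R n)) mulr0 scale0r.
exact: sub0mx.
Qed.

Lemma heis_nilsoliton : nilsoliton (@heis_sc R n) (heis_g2 R n).
Proof.
split; first exact: hnil.
exists ((n%:R + 2) / 2), (ric_op (@heis_sc R n) (heis_g2 R n) - ((n%:R + 2) / 2)%:M).
split; last by rewrite addrC subrK.
rewrite /ric_op g2E.
exact: (ricderiv (hPt R n) (hJt R n) (hPP R n) (hPJ R n) (hJP R n) (hJJ R n) (hAP R n) (hNP R n)
  (haA R n) (haN R n) (hzA R n) (hzN R n) (or_introl erefl) (hGG R n) (htrP R n) (htrJ R n) (@hsc R n) erefl).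
Qed.

End HeisNil.


Section Ext.
Variables (R : realType) (n : nat).
Local Notation N := (n.*2.+1).
Local Notation M := (1 + n.*2.+1)%N.

Definition eA' : 'rV[R]_M := a_sp R 1 N.
Definition eN' : 'rV[R]_M := row_mx 0 (hN R n).
Definition P' : 'M[R]_M := block_mx 0 0 0 (hP R n).
Definition J' : 'M[R]_M := block_mx 0 0 0 (hJ R n).
Definition t' : R := 1 / 2.
Definition sc' (i j : 'I_M) : 'rV[R]_M := Br eA' eN' P' J' t' (evec R i) (evec R j).
Definition G' : 'M[R]_M := GG eA' eN' P'.

Ltac msimp := rewrite ?trmx0 ?trmx1 ?mulmx0 ?mul0mx ?mulmx1 ?mul1mx ?addr0 ?add0r.
Lemma ePt : P'^T = P'. Proof. by rewrite /P' tr_block_mx !trmx0 hPt. Qed.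
Lemma eJt : J'^T = - J'. Proof. by rewrite /J' tr_block_mx !trmx0 hJt opp_block_mx !oppr0. Qed.
Lemma ePP : P' *m P' = P'.
Proof. by rewrite /P' mulmx_block !mulmx0 !mul0mx !addr0 add0r hPP. Qed.
Lemma ePJ : P' *m J' = J'.
Proof. by rewrite /P' /J' mulmx_block !mulmx0 !mul0mx !addr0 add0r hPJ. Qed.
Lemma eJP : J' *m P' = J'.
Proof. by rewrite /P' /J' mulmx_block !mulmx0 !mul0mx !addr0 add0r hJP. Qed.
Lemma eJJ : J' *m J' = - P'.
Proof. by rewrite /P' /J' mulmx_block !mulmx0 !mul0mx !addr0 add0r hJJ opp_block_mx !oppr0. Qed.
Lemma eAP : eA' *m P' = 0.
Proof. rewrite /eA' /a_sp /P' mul_row_block; msimp; by rewrite row_mx0. Qed.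
Lemma eNP : eN' *m P' = 0.
Proof. rewrite /eN' /P' mul_row_block; msimp; by rewrite hNP row_mx0. Qed.
Lemma eaA : aa eA' eA' = 1.
Proof. rewrite /aa /eA' /a_sp tr_row_mx mul_row_col; msimp; by rewrite mxE. Qed.
Lemma eaN : aa eA' eN' = 0.
Proof. rewrite /aa /eA' /eN' /a_sp tr_row_mx mul_row_col; msimp; by rewrite mxE. Qed.
Lemma ezA : zz eN' eA' = 0.
Proof. rewrite /zz /eA' /eN' /a_sp tr_row_mx mul_row_col; msimp; by rewrite mxE. Qed.
Lemma ezN : zz eN' eN' = 1.
Proof. rewrite /zz /eN' tr_row_mx mul_row_col; msimp; exact: hzN. Qed.

Lemma eGform : G' = block_mx (- 1%:M) 0 0 (GG (hA R n) (hN R n) (hP R n)).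
Proof.
rewrite /G' /GG /eA' /a_sp /eN' /P' /hA !tr_row_mx !mul_col_row !trmx0 trmx1.
rewrite !mul0mx !mulmx0 mul1mx !opp_block_mx !add_block_mx !oppr0 !addr0 !add0r.
by [].
Qed.

Lemma eGG : G' *m G' = 1%:M.
Proof.
rewrite eGform mulmx_block !mulmx0 !mul0mx !addr0 !add0r hGG mulNmx mulmxN mul1mx opprK.
by rewrite -scalar_mx_block.
Qed.

Lemma etrP : \tr P' = 2 * n%:R.
Proof. by rewrite /P' mxtrace_block mxtrace0 add0r htrP. Qed.
Lemma etrJ : \tr J' = 0.
Proof. by rewrite /J' mxtrace_block mxtrace0 add0r htrJ. Qed.
Lemma esc i j : sc' i j = Br eA' eN' P' J' t' (evec R i) (evec R j). Proof. by []. Qed.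


Lemma elbr X Y : lbr sc' X Y = Br eA' eN' P' J' t' X Y.
Proof. exact: (lbrE ePt ePP eAP eNP eaN ezN eGG esc). Qed.

Lemma incl_a X : aa eA' (row_mx 0 X) = 0.
Proof. rewrite /aa /eA' /a_sp tr_row_mx mul_row_col; msimp; by rewrite mxE. Qed.

Lemma incl_om X Y : om J' (row_mx 0 X) (row_mx 0 Y) = om (hJ R n) X Y.
Proof. by rewrite /om /J' tr_row_mx mul_block_col mul_row_col; msimp. Qed.

Lemma nsp_mem v : (v <= n_sp R 1 N)%MS <-> aa eA' v = 0.
Proof.
split.
  by case/submxP => D ->; rewrite /n_sp mul_mx_row mulmx0 mulmx1 incl_a.
rewrite -[v]hsubmxK /aa /eA' /a_sp tr_row_mx mul_row_col; msimp => h.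
have -> : lsubmx v = 0 by apply/rowP => i; rewrite ord1 [RHS]mxE; exact: h.
apply/submxP; exists (rsubmx v); by rewrite /n_sp mul_mx_row mulmx0 mulmx1.
Qed.

Lemma e_restr X Y : lbr sc' (incl_n 1 X) (incl_n 1 Y) = incl_n 1 (lbr (@heis_sc R n) X Y).
Proof.
rewrite elbr /incl_n (Br_n eN' P' J' t' (incl_a X) (incl_a Y)) incl_om hlbr.
by rewrite /eN' scale_row_mx scaler0.
Qed.

Lemma e_ip X Y : ip G' (incl_n 1 X) (incl_n 1 Y) = ip (heis_g2 R n) X Y.
Proof.
rewrite /ip eGform g2E /incl_n mul_row_block; msimp.
by rewrite tr_row_mx mul_row_col; msimp.
Qed.

Lemma e_perp X : (X <= n_sp R 1 N)%MS <->
   (forall Y, (Y <= a_sp R 1 N)%MS -> ip G' X Y = 0).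
Proof.
split.
  move=> /nsp_mem hX Y /submxP [D ->].
  rewrite [D]mx11_scalar mul_scalar_mx -/eA' /G' (ip_aZ ePt eAP eaA ezA) hX.
  by rewrite mulr0 oppr0.
move=> h; apply/nsp_mem; have := h eA' (submx_refl _).
rewrite -[eA' in ip _ _ eA']scale1r /G' (ip_aZ ePt eAP eaA ezA).
by rewrite !mul1r => /eqP; rewrite oppr_eq0 => /eqP.
Qed.

Lemma sum1v (V : zmodType) m (F : 'I_m -> V) i0 :
  (forall k, k != i0 -> F k = 0) -> \sum_k F k = F i0.
Proof. move=> h; rewrite (bigD1 i0) //= big1 ?addr0 // => k /h. Qed.

Lemma lbr_in m (sc : 'I_m -> 'I_m -> 'rV[R]_m) U W : (lbr sc U W <= brspace sc 1%:M 1%:M)%MS.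
Proof.
rewrite /lbr; apply: summx_sub => i _; apply: summx_sub => j _; apply: scalemx_sub.
apply: (sumsmx_sup i) => //; apply: (sumsmx_sup j) => //; rewrite genmxE.
have -> : lbr sc (row i 1%:M) (row j 1%:M) = sc i j.
  rewrite /lbr !row1 (sum1v (i0 := i)); last first.
    by move=> k hk; rewrite big1 // => l _; rewrite mxE (negbTE hk) /= mul0r scale0r.
  rewrite (sum1v (i0 := j)); last first.
    by move=> k hk; rewrite !mxE (negbTE hk) /= mulr0 scale0r.
  by rewrite !mxE !eqxx /= mulr1 scale1r.
exact: submx_refl.
Qed.

Lemma bs_n : (brspace sc' 1%:M 1%:M <= n_sp R 1 N)%MS.
Proof.
apply: brspace_sub => X Y _ _; apply/nsp_mem.
by rewrite elbr (aBr J' t' ePt eAP eaN).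
Qed.

Lemma e_bs : (brspace sc' 1%:M 1%:M == n_sp R 1 N)%MS.
Proof.
apply/andP; split; first exact: bs_n.
apply/row_subP => k.
have hv : aa eA' (row k (n_sp R 1 N)) = 0 by apply/nsp_mem; exact: row_sub.
have ht : t' != 0 by rewrite /t' mul1r invr_eq0 pnatr_eq0.
rewrite (Br_surj ePt eJt ePP ePJ eAP eNP eaA eaN ezA ezN eGG ht erefl hv) -elbr.
exact: lbr_in.
Qed.

Lemma e_solv : solvable_lie sc'.
Proof.
exists 3%N; rewrite /derived /=.
apply/andP; split; last exact: sub0mx.
set D1 := brspace sc' 1%:M 1%:M.
have D2 : (brspace sc' D1 D1 <= eN')%MS.
  apply: brspace_sub => X Y hX hY.
  have /nsp_mem hX' := submx_trans hX bs_n.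
  have /nsp_mem hY' := submx_trans hY bs_n.
  rewrite elbr (Br_n eN' P' J' t' hX' hY').
  exact: scalemx_sub (submx_refl _).
apply: brspace_sub => X Y hX hY.
case/submxP: (submx_trans hX D2) => D ->.
case/submxP: (submx_trans hY D2) => E ->.
rewrite [D]mx11_scalar [E]mx11_scalar !mul_scalar_mx elbr.
have h0 : forall c, aa eA' (c *: eN') = 0 by move=> c; rewrite aZ eaN mulr0.
rewrite (Br_n eN' P' J' t' (h0 _) (h0 _)) omZr omZl (omNr0 eJt ePJ eNP).
by rewrite !mulr0 scale0r; exact: sub0mx.
Qed.

Lemma e_ext : metric_solvable_ext (@heis_sc R n) (heis_g2 R n) sc' G'.
Proof.
split; first exact: (lie_sc ePt eJt ePP ePJ eAP eNP eaN ezN eGG esc).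
split; first exact: e_solv.
split; first by split; [exact: (GGsym eA' eN' ePt) | exact: (GGunit eGG)].
split; first exact: e_bs.
split; first exact: e_perp.
split; first exact: e_restr.
exact: e_ip.
Qed.

Lemma e_einstein : einstein sc' G'.
Proof.
exists ((n%:R + 2) / 2).
rewrite /G' (ricci_gen ePt eJt ePP ePJ eJP eJJ eAP eNP eaA eaN ezA ezN (or_intror erefl) eGG etrP etrJ esc).
rewrite /alp /bet /gam /GG /t'.
apply/matrixP => i j; rewrite !mxE.
by field.
Qed.

End Ext.


Theorem mainTheorem2 (R : realType) (n : nat) (hn : (1 <= n)%N) :
  nilsoliton (@heis_sc R n) (heis_g2 R n) /\
  exists (k : nat) (sc' : 'I_(k + n.*2.+1) -> 'I_(k + n.*2.+1) -> 'rV[R]_(k + n.*2.+1))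
         (G' : 'M[R]_(k + n.*2.+1)),
    metric_solvable_ext (@heis_sc R n) (heis_g2 R n) sc' G' /\ einstein sc' G'.
Proof.
split; first exact: heis_nilsoliton.
exists 1%N, (@sc' R n), (G' R n).
split; [exact: e_ext | exact: e_einstein].
Qed.
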